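(* Let $\mathcal{G}=(\mathcal{P},\mathcal{L})$ be a Fischer space with finitely many points, let $R$ be a commutative ring with $2=0$, let $A=M_R(\mathcal{G},1)$ and let $s=\sum_{p\in\mathcal{P}}p\in A$. Then $\operatorname{Ann}(A)=Rs$.
   Context: A 3-transposition group is a pair $(G,D)$ where $D$ is a single conjugacy class of involutions generating $G$ with $de$ of order at most $3$ for all $d,e\in D$. Its Fischer space $\mathcal{G}=(\mathcal{P},\mathcal{L})$ has $\mathcal{P}=D$ and as lines the $3$-subsets consisting of the three involutions of a subgroup isomorphic to $\mathrm{Sym}(3)$; since $D$ is one conjugacy class, $\mathcal{G}$ is connected. Distinct points on a common line are collinear ($p\sim q$), and $p\wedge q$ is the third point of that line. The nilpotent Matsuo algebra $A=M_R(\mathcal{G},1)$ is the free $R$-module with basis $\mathcal{P}$ and commutative bilinear product $p\cdot q=0$ if $p=q$ or $p\not\sim q$, $p\cdot q=p+q+p\wedge q$ if $p\sim q$. $\operatorname{Ann}(A)=\{v\in A: vw=0 \text{ for all } w\in A\}$. *)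

(* Defs.v *)
From HB Require Import structures.
From mathcomp Require Import all_boot all_order all_fingroup all_algebra.
Set Implicit Arguments. Unset Strict Implicit. Unset Printing Implicit Defensive.
Import GRing.Theory.
Local Open Scope ring_scope.

(* A 3-transposition group (G, D) with G = <<D>>: D is a single conjugacy class
   of G consisting of involutions, and every product of two elements of D has
   order at most 3.  Since gT is a finGroupType, D is finite. *)
Definition three_transposition {gT : finGroupType} (D : {set gT}) : Prop :=
  [/\ exists2 d, d \in D & D = (d ^: <<D>>)%g,
      forall d, d \in D -> #[d]%g = 2%N &
      forall d e, d \in D -> e \in D -> (#[(d * e)%g]%g <= 3)%N].

Definition pts {gT : finGroupType} (D : {set gT}) := {x : gT | x \in D}.

(* Collinearity in the Fischer space: p <> q and <p,q> ~ Sym(3), i.e. pq has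
   order 3; the third point of the line is p /\ q = p ^ q = q p q. *)
Definition collinear {gT : finGroupType} (p q : gT) : bool :=
  (p != q) && (#[(p * q)%g]%g == 3%N).
Definition wedge {gT : finGroupType} (p q : gT) : gT := (p ^ q)%g.

(* The nilpotent Matsuo algebra M_R(G,1): free R-module on the points,
   elements are coefficient functions; the product is the bilinear extension
   of p.q = 0 if p = q or p, q not collinear, p.q = p + q + p/\q otherwise. *)
Definition matsuo_mul {gT : finGroupType} (D : {set gT}) (R : comPzRingType)
    (v w : {ffun pts D -> R}) : {ffun pts D -> R} :=
  [ffun r : pts D => \sum_(p : pts D) \sum_(q : pts D | collinear (val p) (val q))
      v p * w q * ((val r == val p)%:R + (val r == val q)%:R
                   + (val r == wedge (val p) (val q))%:R)].

Definition in_Ann {gT : finGroupType} (D : {set gT}) (R : comPzRingType)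
    (v : {ffun pts D -> R}) : Prop :=
  forall w, matsuo_mul v w = 0.

Definition sum_pts {gT : finGroupType} (D : {set gT}) (R : comPzRingType)
  : {ffun pts D -> R} := [ffun _ => 1].

(* Main.v *)
Require Import Defs.
From mathcomp Require Import all_boot all_order all_fingroup all_algebra.
Set Implicit Arguments. Unset Strict Implicit.
Import GRing.Theory.
Local Open Scope ring_scope.

Lemma inv_sq (gT : finGroupType) (q : gT) : #[q]%g = 2%N -> (q * q = 1)%g.
Proof. by move=> h; have := expg_order q; rewrite h expgS expg1. Qed.

Lemma invE (gT : finGroupType) (q : gT) : #[q]%g = 2%N -> (q^-1 = q)%g.
Proof. by move=> h; apply/eqP; rewrite eq_invg_mul inv_sq. Qed.

Lemma conjKK (gT : finGroupType) (x q : gT) : #[q]%g = 2%N -> ((x ^ q) ^ q = x)%g.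
Proof. by move=> h; rewrite -conjgM inv_sq // conjg1. Qed.

Lemma noncoll_fix (gT : finGroupType) (r q : gT) :
  #[q]%g = 2%N -> #[r]%g = 2%N -> (#[(r * q)%g]%g <= 3)%N -> ~~ collinear r q ->
  (r ^ q = r)%g.
Proof.
move=> hq hr h3; rewrite /collinear negb_and negbK => /orP[/eqP->|h].
  by rewrite conjgE mulKg.
have h1 : (0 < #[(r*q)%g]%g)%N := order_gt0 _.
have : (#[(r * q)%g]%g == 1)%N || (#[(r * q)%g]%g == 2)%N.
  by move: h h1 h3; case: (#[(r * q)%g]%g) => [|[|[|[|n]]]].
case/orP.
  rewrite order_eq1 => /eqP e.
  have : r = q^-1%g by rewrite -(mulgK q r) e mul1g.
  by rewrite invE // => ->; rewrite conjgE mulKg.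
move/eqP=> e; have := expg_order (r * q)%g; rewrite e expgS expg1 => e2.
have : ((r * q)^-1 = r * q)%g by apply/eqP; rewrite eq_invg_mul e2.
rewrite invMg !invE // => e3.
by rewrite conjgE invE // -e3 mulgA inv_sq // mul1g.
Qed.

Lemma coll_conj (gT : finGroupType) (a q : gT) : #[q]%g = 2%N ->
  collinear (a ^ q)%g q = collinear a q.
Proof.
move=> hq; rewrite /collinear.
have -> : ((a ^ q)%g != q) = (a != q).
  congr negb; apply/eqP/eqP => [e|->]; last by rewrite conjgE mulKg.
  by rewrite -(@conjKK _ a q hq) e conjgE mulKg.
congr andb; congr eq_op.
have -> : (a ^ q * q = (a * q) ^ a)%g.
  rewrite !conjgE mulgA invE // -(mulgA _ q q) inv_sq // mulg1 !mulgA mulVg mul1g. by [].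
by rewrite orderJ.
Qed.

Lemma coll_neq (gT : finGroupType) (a q : gT) : #[a]%g = 2%N -> #[q]%g = 2%N ->
  collinear a q -> (a ^ q)%g != a.
Proof.
move=> ha hq; case/andP=> _ /eqP h; apply/negP => /eqP e.
have c : (a * q = q * a)%g by rewrite (conjgC a q) e.
have e2 : ((a * q) ^+ 2 = 1)%g.
  by rewrite expgS expg1 -mulgA (mulgA q) -c -mulgA inv_sq // mulg1 inv_sq.
have := expg_order (a * q)%g; rewrite h expgS e2 mulg1 => /eqP.
by rewrite -order_eq1 h.
Qed.
Lemma invol_sum (I : finType) (R : comPzRingType) (P : pred I) (s : I -> I) (g : I -> R) :
  2%:R = 0 :> R -> (forall i, s (s i) = i) -> (forall i, P i -> s i != i) ->
  (forall i, P (s i) = P i) -> (forall i, g (s i) = g i) -> \sum_(i | P i) g i = 0.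
Proof.
move=> h2 ss sn Ps gs.
pose rk (i : I) : nat := enum_rank i.
have e : \sum_(i | P i) g i = \sum_(i | P i) (g i * (rk i < rk (s i))%N%:R
                                   + g i * (rk (s i) < rk i)%N%:R).
  apply: eq_bigr => i Pi; rewrite -mulrDr.
  have : rk i != rk (s i).
    apply/negP => /eqP /val_inj /enum_rank_inj e; by move: (sn i Pi); rewrite -e eqxx.
  by rewrite neq_ltn => /orP[] h; [rewrite h ltnNge ltnW // | rewrite h ltnNge (ltnW h)];
     rewrite ?addr0 ?add0r mulr1.
rewrite e big_split /=.
rewrite [X in _ + X](reindex_inj (can_inj ss)) /=.
rewrite [X in _ + X](eq_bigl P) => [|i]; last by rewrite Ps.
rewrite [X in _ + X](eq_bigr (fun i => g i * (rk i < rk (s i))%N%:R)) => [|i _]; last by rewrite gs ss.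
by rewrite -mulr2n -mulr_natr h2 mulr0.
Qed.

Lemma closure (gT : finGroupType) (D : {set gT}) : three_transposition D ->
  forall r q, r \in D -> q \in D -> (r ^ q)%g \in D.
Proof.
case=> [[d _ hd] _ _] r q; rewrite hd => /imsetP[g gG ->] qD.
by rewrite -conjgM memJ_class // groupM // mem_gen // hd.
Qed.

Definition cj (gT : finGroupType) (D : {set gT})
  (cl : forall r q, r \in D -> q \in D -> (r ^ q)%g \in D) (q p : pts D) : pts D :=
  exist _ (val p ^ val q)%g (cl _ _ (valP p) (valP q)).

Lemma inner_sum (gT : finGroupType) (D : {set gT}) (R : comPzRingType)
  (v : {ffun pts D -> R}) (q p : pts D) (F : pts D -> R) :
  \sum_(q' : pts D | collinear (val p) (val q'))
      v p * [ffun x : pts D => ((x == q)%:R : R)] q' * F q'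
  = if collinear (val p) (val q) then v p * F q else 0.
Proof.
rewrite big_mkcond (bigD1 q) //= big1 => [|i /negbTE iq]; last first.
  by rewrite ffunE iq mulr0 mul0r if_same.
by rewrite ffunE eqxx mulr1 addr0.
Qed.

Lemma ann_coll (gT : finGroupType) (D : {set gT}) (R : comPzRingType)
  (TT : three_transposition D) (h2 : 2%:R = 0 :> R)
  (v : {ffun pts D -> R}) (Hv : in_Ann v) (a q : pts D) :
  collinear (val a) (val q) -> v (cj (closure TT) q a) = v a.
Proof.
move=> caq.
have [_ hD2 _] := TT.
have oa := hD2 _ (valP a); have oq := hD2 _ (valP q).
have := congr1 (fun f : {ffun pts D -> R} => f a) (Hv [ffun x : pts D => ((x == q)%:R : R)]).
rewrite /matsuo_mul ffunE /= ffunE.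
under eq_bigr => p _ do rewrite inner_sum.
set a' := cj (closure TT) q a.
have aa' : a' != a.
  apply/negP => /eqP /(congr1 val) /=; apply/eqP; exact: coll_neq.
rewrite (bigD1 a) //= (bigD1 a') //= big1 => [|p /andP[pa pa']]; last first.
  case: ifP => // _.
  rewrite [val a == val p]eq_sym (inj_eq val_inj) (negbTE pa).
  have -> : (val a == val q) = false.
    by apply/negbTE; case/andP: caq.
  have -> : (val a == wedge (val p) (val q)) = false.
    apply/negbTE/negP => /eqP e; move/negP: pa'; apply; apply/eqP/val_inj => /=.
    by rewrite e /wedge conjKK.
  by rewrite !addr0 mulr0.
rewrite caq /= coll_conj // caq eqxx.
have -> : (val a == val q) = false by apply/negbTE; case/andP: caq.
have -> : (val a == wedge (val a) (val q)) = false.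
  by apply/negbTE; rewrite eq_sym; exact: coll_neq.
rewrite /wedge conjKK // eqxx /= !(addr0, add0r, mulr1) => e.
have nn (x : R) : - x = x.
  by apply/eqP; rewrite eq_sym -subr_eq0 opprK -mulr2n -mulr_natr h2 mulr0.
by apply/eqP; rewrite -subr_eq0 -[v a]nn opprK addrC e.
Qed.


Unset Implicit Arguments.

Theorem lemma5p8 (gT : finGroupType) (D : {set gT}) (R : comPzRingType) :
  three_transposition D -> 2%:R = 0 :> R ->
  forall v : {ffun pts D -> R},
    in_Ann v <-> exists c : R, v = [ffun p => c * sum_pts D R p].
Proof.
move=> TT h2 v.
have [[d dD hd] hD2 hD3] := TT.
pose cl := closure TT.
split.
- move=> Hv.
  have fixp (r q : pts D) : v (cj cl q r) = v r.
    case C : (collinear (val r) (val q)); first exact: (ann_coll TT h2 Hv C).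
    congr (v _); apply: val_inj => /=.
    apply: noncoll_fix; [exact: hD2 (valP q) | exact: hD2 (valP r) | exact: hD3 (valP r) (valP q) | by rewrite C].
  pose vt (x : gT) : R := if insub x is Some p then v p else 0.
  have vtE (p : pts D) : vt (val p) = v p by rewrite /vt valK.
  have fix1 x y : x \in D -> y \in D -> vt (x ^ y)%g = vt x.
    move=> xD qD; idtac.
    pose pr := exist (fun z => z \in D) x xD; pose pq := exist (fun z => z \in D) y qD.
    rewrite (_ : (x ^ y)%g = val (cj cl pq pr)) // vtE fixp.
    by rewrite -vtE.
  pose S := [set g : gT | [forall x in D, ((x ^ g)%g \in D) && (vt (x ^ g)%g == vt x)]].
  have gS : group_set S.
    apply/group_setP; split.
      by rewrite inE; apply/forall_inP => x xD; rewrite conjg1 xD eqxx.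
    move=> g h; rewrite !inE => /forall_inP Hg /forall_inP Hh; apply/forall_inP => x xD.
    case/andP: (Hg x xD) => xgD /eqP e1; case/andP: (Hh _ xgD) => xghD /eqP e2.
    by rewrite conjgM xghD e2 e1 eqxx.
  have sub : <<D>>%g \subset S.
    rewrite (gen_subG D (Group gS)); apply/subsetP => y yD; rewrite inE.
    by apply/forall_inP => x xD; rewrite cl // fix1 // eqxx.
  exists (vt d); apply/ffunP => p; rewrite !ffunE mulr1 -vtE.
  have pD : val p \in (d ^: <<D>>)%g by rewrite -hd (valP p).
  case/imsetP: pD => g gG ->.
  by have := subsetP sub _ gG; rewrite inE => /forall_inP /(_ d dD) /andP[_ /eqP].
- case=> c ->; move=> w; apply/ffunP => r; rewrite !ffunE.
  under eq_bigr => p _ do rewrite big_mkcond.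
  rewrite exchange_big /=.
  apply: big1 => q _.
  have oq := hD2 _ (valP q).
  pose Fp (p : pts D) : R := ((val r == val p)%:R + (val r == val q)%:R
                   + (val r == wedge (val p) (val q))%:R).
  rewrite (eq_bigr (fun p => if collinear (val p) (val q) then c * w q * Fp p else 0)); last first.
    by move=> p _; case: ifP => // _; rewrite !ffunE mulr1.
  rewrite -big_mkcond /= -mulr_sumr.
  rewrite (@invol_sum _ _ (fun p => collinear (val p) (val q)) (cj cl q)) ?mulr0 //.
  + by move=> i; apply: val_inj => /=; exact: conjKK.
  + move=> i /= Ci; apply/negP => /eqP/(congr1 val) /=; apply/eqP; apply: coll_neq Ci => //.
    exact: hD2 (valP i).
  + by move=> i /=; rewrite coll_conj.
  + move=> i; rewrite /Fp /wedge /= conjKK //.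
    by rewrite addrAC [RHS]addrAC (addrC (sval r == sval i)%:R).
Qed.
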